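(* Let $G$ be labeled by an $\mathcal{AL}$ labeling $\langle r,d_1,d_2\rangle$, and let $x$ be a black node that belongs to class $B$, $C$, or $D$. Then $\mathit{Is\_B}(x)$ returns ``$B$'' iff $x$ is in class $B$, and returns ``$D$'' iff $x$ is in class $D$ and is not a $\mathbf{B}$-node. The robot is in node $x$ when $\mathit{Is\_B}(x)$ exits. In the call $\mathit{Is\_B}(x)$ the robot needs $O(d_1\log\Delta)$ bits of memory, and the total number of edge traversals is $O(\Delta^{d_1+2})$.
   Context: $G$ is an undirected connected anonymous graph (loops and multiple edges allowed) of maximum degree $\Delta$ and diameter $D$, with ports $0,\dots,\mathtt{deg}(v)-1$ at each node $v$; the robot sees the degree, the color of the current node and the entry port and moves by choosing exit ports. $\mathcal{AL}$ labeling $\langle r,d_1,d_2\rangle$: root $r$; $d(\cdot,\cdot)$ graph distance; integers $d_1\ge 2$, $d_2$ with $\lfloor d_2/2\rfloor\ge d_1$; $q=d_1+d_2+2$; classes $C=\{v:d(r,v)\bmod q=0\}$, $D=\{v:d(r,v)\bmod q=1\}$, $A=\{v:d(r,v)\bmod q=d_2+1\}$, $B=\{v:d(r,v)\bmod q=d_1+d_2+1\}$; nodes of $A\cup B\cup C\cup D$ are black, others white; it is assumed $D\ge d_1+d_2+1$. A $\mathbf{B}$-node is a black node all of whose neighbors are black. White local search from $u$ within radius $\ell$: the recursive procedure $\mathit{WLS}(v,k,\mathit{inport})$, called as $\mathit{WLS}(u,\ell,-1)$: if $k=0$ report $v$; otherwise, if $v$ is black and $k\ne\ell$, return; otherwise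 for each port $\mathit{outport}\neq\mathit{inport}$ of $v$ in increasing order, move through it to neighbor $w$, call $\mathit{WLS}(w,k-1,\text{entry port at }w)$, and move back to $v$. Procedure $\mathit{Is\_B}(x)$: if $x$ is a $\mathbf{B}$-node, return ``$\mathbf{B}$-node''. Otherwise perform a white local search from $x$ within radius $d_1$; as soon as a reported node $y$ is black and has no $\mathbf{B}$-node neighbor, return (to $x$ and output) ``$B$''; if no such $y$ is reported (or no node is reported), return ``$D$''. *)

(* Defs.v *)
From mathcomp Require Import all_boot.
Set Implicit Arguments.
Unset Strict Implicit.
Unset Printing Implicit Defensive.

(* Anonymous port-labeled graphs (loops and multiple edges allowed). *)
(* Ports at v are 0 .. deg v - 1; nbr v i is the node reached through *)
(* port i of v, and eport v i the port number at which it is entered. *)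
Record pgraph (V : finType) := PGraph {
  deg : V -> nat;
  nbr : V -> nat -> V;
  eport : V -> nat -> nat;
  eport_lt : forall v i, i < deg v -> eport v i < deg (nbr v i);
  nbr_back : forall v i, i < deg v -> nbr (nbr v i) (eport v i) = v;
  eport_back : forall v i, i < deg v -> eport (nbr v i) (eport v i) = i;
  (* a loop occupies two distinct ports *)
  loop_ports : forall v i, i < deg v -> nbr v i = v -> eport v i != i
}.

Section Graph.
Variables (V : finType) (G : pgraph V).

Fixpoint ball (k : nat) (u : V) : {set V} :=
  match k with
  | 0 => [set u]
  | k'.+1 => let B := ball k' u in
      B :|: [set w | [exists v in B, [exists i : 'I_(deg G v), nbr G v i == w]]]
  end.

Definition connected : Prop := forall u v, exists k, v \in ball k u.

(* graph distance (correct for connected graphs, where it is < #|V|) *)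
Definition dist (u v : V) : nat := find (fun k => v \in ball k u) (iota 0 #|V|).

Definition diam : nat := \max_(u : V) \max_(v : V) dist u v.
Definition maxdeg : nat := \max_(v : V) deg G v.

Variables (r : V) (d1 d2 : nat).
Definition qAL := d1 + d2 + 2.
Definition inC (v : V) := dist r v %% qAL == 0.
Definition inD (v : V) := dist r v %% qAL == 1.
Definition inA (v : V) := dist r v %% qAL == d2 + 1.
Definition inB (v : V) := dist r v %% qAL == d1 + d2 + 1.
Definition black (v : V) := [|| inA v, inB v, inC v | inD v].
Definition ports (v : V) := iota 0 (deg G v).
Definition Bnode (v : V) := black v && all (fun p => black (nbr G v p)) (ports v).

(* checking whether v is a B-node: visit every neighbour and come back *)
Definition Bnode_test (v : V) : seq nat * bool :=
  (flatten [seq [:: p; eport G v p] | p <- ports v], Bnode v).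

Definition hasBnbr_test (v : V) : seq nat * bool :=
  (flatten [seq p :: (Bnode_test (nbr G v p)).1 ++ [:: eport G v p] | p <- ports v],
   has (fun p => (Bnode_test (nbr G v p)).2) (ports v)).

Definition report_test (y : V) : seq nat * bool :=
  if black y then ((hasBnbr_test y).1, ~~ (hasBnbr_test y).2) else ([::], false).

Fixpoint scan (ps : seq nat) (f : nat -> seq nat * bool) : seq nat * bool :=
  match ps with
  | [::] => ([::], false)
  | p :: ps' => let m := f p in
      if m.2 then (m.1, true)
      else let m' := scan ps' f in (m.1 ++ m'.1, m'.2)
  end.

(* WLS(v, k, inport) within radius l, with early exit on success; the
   result is (sequence of exit ports taken, success flag) *)
Fixpoint wls (l k : nat) (v : V) (inport : option nat) : seq nat * bool :=
  match k with
  | 0 => report_test v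
  | k'.+1 =>
      if black v && (k != l) then ([::], false)
      else scan [seq p <- ports v | Some p != inport]
             (fun p => let m := wls l k' (nbr G v p) (Some (eport G v p)) in
                       (p :: m.1 ++ [:: eport G v p], m.2))
  end.

Inductive answer := Ans_Bnode | Ans_B | Ans_D.

Definition IsB (x : V) : seq nat * answer :=
  if (Bnode_test x).2 then ((Bnode_test x).1, Ans_Bnode)
  else let m := wls d1 d1 x None in
       ((Bnode_test x).1 ++ m.1, if m.2 then Ans_B else Ans_D).

End Graph.

Definition walk_end (V : finType) (G : pgraph V) (v : V) (ms : seq nat) : V :=
  foldl (fun w p => nbr G w p) v ms.

(* The memory content is a natural number (a binary string); at each step
   the robot sees its memory, the degree, the colour (black?) of the
   current node and the entry port (None at start), and either moves
   through an exit port or halts with an answer.  Initial memory is 0. *)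
Inductive action := Move of nat | Halt of answer.
Record robot := Robot { rstep : nat -> nat -> bool -> option nat -> nat * action }.

Definition bits (s : nat) : nat := up_log 2 s.+1.

(* run for at most [fuel] steps: (exit ports taken, answer if halted,
   final node, maximal number of memory bits used) *)
Fixpoint run (V : finType) (G : pgraph V) (col : V -> bool) (R : robot)
    (fuel : nat) (v : V) (inp : option nat) (s : nat)
    : seq nat * option answer * V * nat :=
  match fuel with
  | 0 => ([::], None, v, bits s)
  | f.+1 =>
      let st := rstep R s (deg G v) (col v) inp in
      match st.2 with
      | Halt a => ([::], Some a, v, maxn (bits s) (bits st.1))
      | Move p =>
          if p < deg G v then
            let '(ms, o, w, b) := run G col R f (nbr G v p) (Some (eport G v p)) st.1 in
            (p :: ms, o, w, maxn (bits s) b)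
          else ([::], None, v, bits s)
      end
  end.

(* Main.v *)
Require Import Defs.
From mathcomp Require Import all_boot.
From mathcomp Require Import zify.
Set Implicit Arguments. Unset Strict Implicit. Unset Printing Implicit Defensive.

Definition pw a b := 2 ^ a * (2 * b).+1.
Fixpoint tzf f x := if f is f'.+1 then (if odd x then 0 else (tzf f' x./2).+1) else 0.
Definition unpw x := let a := tzf x x in (a, (x %/ 2 ^ a)./2).

Lemma pw_gt0 a b : 0 < pw a b.
Proof. by rewrite /pw muln_gt0 expn_gt0. Qed.

Lemma pwS a b : pw a.+1 b = (pw a b).*2.
Proof. by rewrite /pw expnS -mulnA mul2n. Qed.

Lemma tzfS f x : tzf f.+1 x = if odd x then 0 else (tzf f x./2).+1.
Proof. by []. Qed.

Lemma odd_pw0 b : odd (pw 0 b).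
Proof. by rewrite /pw expn0 mul1n oddS oddM. Qed.

Lemma tzf_pw f a b : a < f -> tzf f (pw a b) = a.
Proof.
elim: a f => [|a IH] [|f] H //; rewrite tzfS.
- by rewrite odd_pw0.
- by rewrite pwS odd_double doubleK IH.
Qed.

Lemma half_odd b : ((2 * b).+1)./2 = b.
Proof. by rewrite -add1n mul2n (half_bit_double b true). Qed.

Lemma unpwK a b : unpw (pw a b) = (a, b).
Proof.
rewrite /unpw tzf_pw; last first.
  by apply: (leq_trans (ltn_expl a (isT : 1 < 2))); rewrite /pw leq_pmulr.
by rewrite /pw mulKn ?expn_gt0 // half_odd.
Qed.

Lemma pw_lt a b m : b < 2 ^ m -> pw a b < 2 ^ (a + m.+1).
Proof.
move=> H; rewrite /pw expnD ltn_pmul2l ?expn_gt0 // expnS. lia.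
Qed.

Fixpoint hor w (l : seq nat) := if l is e :: l' then e + 2 ^ w * hor w l' else 0.
Fixpoint unhor w n D := if n is n'.+1 then D %% 2 ^ w :: unhor w n' (D %/ 2 ^ w) else [::].

Lemma unhorK w l : all (fun e => e < 2 ^ w) l -> unhor w (size l) (hor w l) = l.
Proof.
elim: l => //= e l IH /andP[He Hl].
rewrite [e + _]addnC [2 ^ w * _]mulnC modnMDl modn_small // divnMDl ?expn_gt0 // divn_small // addn0 IH //.
Qed.

Lemma hor_lt w l : all (fun e => e < 2 ^ w) l -> hor w l < 2 ^ (w * size l).
Proof.
elim: l => [|e l IH] /=; first by rewrite expn_gt0.
move=> /andP[He /IH Hl]; rewrite mulnS expnD.
apply: (@leq_trans (2 ^ w * (hor w l).+1)).
  by rewrite mulnS; lia.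
by rewrite leq_pmul2l ?expn_gt0.
Qed.

Definition wd e := up_log 2 e.+1.
Definition Wd l := foldr maxn 0 (map wd l).

Lemma wd_lt e : e < 2 ^ wd e.
Proof. exact: up_logP. Qed.

Lemma Wd_all l : all (fun e => e < 2 ^ Wd l) l.
Proof.
apply/allP=> e el; apply: (leq_trans (wd_lt e)); rewrite leq_exp2l //.
elim: l el => //= x l IH; rewrite inE => /orP[/eqP->|/IH H]; first by rewrite leq_maxl.
exact: leq_trans H (leq_maxr _ _).
Qed.

Lemma Wd_le l K : all (fun e => e < K) l -> Wd l <= up_log 2 K.
Proof.
elim: l => //= e l IH /andP[He Hl]; rewrite geq_max IH // andbT.
exact: leq_up_log.
Qed.

Definition enc (l : seq nat) := pw (size l) (pw (Wd l) (hor (Wd l) l)).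
Definition dec (s : nat) := let (n, x) := unpw s in let (w, D) := unpw x in unhor w n D.

Lemma encK l : dec (enc l) = l.
Proof. by rewrite /dec /enc !unpwK unhorK // Wd_all. Qed.

Lemma enc_gt0 l : 0 < enc l.
Proof. exact: pw_gt0. Qed.

Lemma bits_enc l : bits (enc l) <= size l + Wd l * (size l).+1 + 2.
Proof.
rewrite /bits; apply: up_log_min => //.
have H1 := hor_lt (Wd_all l).
have H2 := pw_lt (Wd l) H1.
have H3 := pw_lt (size l) H2.
apply: leq_trans H3 _; rewrite leq_exp2l //. rewrite mulnS. lia.
Qed.
Inductive ast :=
 | AInit
 | BXo of bool
 | BXh of bool
 | SWd of seq nat
 | SWa of bool & seq nat
 | Hw of bool & seq nat
 | Hp of bool & bool & nat & seq nat
 | Hwr of bool & bool & nat & seq nat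
 | Hyr of bool & seq nat.

Definition ser (s : ast) : seq nat :=
  match s with
  | AInit => [:: 0; 0; 0; 0]
  | BXo a => [:: 1; nat_of_bool a; 0; 0]
  | BXh a => [:: 2; nat_of_bool a; 0; 0]
  | SWd stk => [:: 3; 0; 0; 0] ++ stk
  | SWa r stk => [:: 4; nat_of_bool r; 0; 0] ++ stk
  | Hw h stk => [:: 5; nat_of_bool h; 0; 0] ++ stk
  | Hp h a e stk => [:: 6; nat_of_bool h; nat_of_bool a; e] ++ stk
  | Hwr h a e stk => [:: 7; nat_of_bool h; nat_of_bool a; e] ++ stk
  | Hyr h stk => [:: 8; nat_of_bool h; 0; 0] ++ stk
  end.

Definition deser (l : seq nat) : ast :=
  match l with
  | t :: b1 :: b2 :: e :: stk =>
    let h := b1 != 0 in let a := b2 != 0 in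
    match t with
    | 1 => BXo h | 2 => BXh h | 3 => SWd stk | 4 => SWa h stk | 5 => Hw h stk
    | 6 => Hp h a e stk | 7 => Hwr h a e stk | 8 => Hyr h stk
    | _ => AInit end
  | _ => AInit
  end.

Lemma serK s : deser (ser s) = s.
Proof. by case: s => [|[]|[]|?|[] ?|[] ?|[] [] ? ?|[] [] ? ?|[] ?]. Qed.

Definition FL (ex : option nat) (dg i : nat) := [seq q <- iota i (dg - i) | Some q != ex].
Definition nextp ex dg i := ohead (FL ex dg i).

Definition ret (res : bool) (stk : seq nat) : ast * action :=
  match stk with
  | [::] => (AInit, Halt (if res then Ans_B else Ans_D))
  | e :: stk' => (SWa res stk', Move e)
  end.

Definition astep (d1 : nat) (s : ast) (dg : nat) (c : bool) (inp : option nat) : ast * action :=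
  let i := odflt 0 inp in
  match s with
  | AInit => if 0 < dg then (BXo c, Move 0)
             else (AInit, Halt (if c then Ans_Bnode else Ans_D))
  | BXo a => (BXh (a && c), Move i)
  | BXh a => if i.+1 < dg then (BXo a, Move i.+1)
             else if a then (AInit, Halt Ans_Bnode) else (SWd [::], Move 0)
  | SWd stk =>
      if size stk + 1 == d1 then
        (if c then (Hw false (i :: stk), Move 0) else (SWa false stk, Move i))
      else if c then (SWa false stk, Move i)
      else match nextp (Some i) dg 0 with
           | Some p => (SWd (i :: stk), Move p)
           | None => (SWa false stk, Move i)
           end
  | SWa res stk =>
      if res then ret true stk else
      match nextp (ohead stk) dg i.+1 with
      | Some p => (SWd stk, Move p)
      | None => ret false stk
      end
  | Hw h stk => (Hp h c i stk, Move 0)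
  | Hp h a e stk => (Hwr h (a && c) e stk, Move i)
  | Hwr h a e stk => if i.+1 < dg then (Hp h a e stk, Move i.+1)
                     else (Hyr (h || a) stk, Move e)
  | Hyr h stk => if i.+1 < dg then (Hw h stk, Move i.+1) else ret (~~ h) stk
  end.

Definition decst (s : nat) : ast := if s == 0 then AInit else deser (dec s).

Definition rob (d1 : nat) : robot :=
  Robot (fun s dg c inp => let st := astep d1 (decst s) dg c inp in (enc (ser st.1), st.2)).

Lemma decst_enc s : decst (enc (ser s)) = s.
Proof. by rewrite /decst gtn_eqF ?enc_gt0 // encK serK. Qed.
Section GraphFacts.
Variables (V : finType) (G : pgraph V).
Local Notation ball := (ball G).
Local Notation dist := (dist G).

Lemma ballS k u : ball k.+1 u = ball k u :|:
  [set w | [exists v in ball k u, [exists i : 'I_(deg G v), nbr G v i == w]]].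
Proof. by []. Qed.

Lemma ball_sub k u : ball k u \subset ball k.+1 u.
Proof. by rewrite ballS subsetUl. Qed.

Lemma ball_mono k k' u : k <= k' -> ball k u \subset ball k' u.
Proof.
move=> H; rewrite -(subnKC H); elim: (k' - k) => [|j IH]; first by rewrite addn0.
by apply: subset_trans IH _; rewrite addnS ball_sub.
Qed.

Lemma ball_nbr k u v i : v \in ball k u -> i < deg G v -> nbr G v i \in ball k.+1 u.
Proof.
move=> Hv Hi; rewrite ballS in_setU; apply/orP; right; rewrite inE.
by apply/existsP; exists v; rewrite Hv /=; apply/existsP; exists (Ordinal Hi).
Qed.

Lemma ball_inv k u w : w \in ball k.+1 u ->
  w \in ball k u \/ exists v i, [/\ v \in ball k u, i < deg G v & nbr G v i = w].
Proof.
rewrite ballS in_setU => /orP[H|]; first by left.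
rewrite inE => /existsP[v /andP[Hv /existsP[i /eqP Hi]]].
by right; exists v, (nat_of_ord i); split.
Qed.

Lemma ball_stable k u : ball k.+1 u = ball k u -> forall j, ball (k + j) u = ball k u.
Proof.
move=> H; elim=> [|j IH]; first by rewrite addn0.
by rewrite addnS ballS IH -ballS H.
Qed.

Lemma ball_grow u k : k < #|ball k u| \/ exists2 k0, k0 <= k & ball k0.+1 u = ball k0 u.
Proof.
elim: k => [|k [IH|[k0 Hk0 IH]]]; first by left; rewrite /= cards1.
- case: (ltnP #|ball k u| #|ball k.+1 u|) => H.
    by left; apply: leq_trans H.
  right; exists k => //; apply/esym/eqP; rewrite eqEcard ball_sub H //.
- by right; exists k0 => //; apply: leq_trans Hk0 _.
Qed.

Lemma ball_small u v k : v \in ball k u -> exists2 k', k' < #|V| & v \in ball k' u.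
Proof.
move=> Hv; case: (ltnP k #|V|) => Hk; first by exists k.
have V0 : 0 < #|V| by apply/card_gt0P; exists u.
exists #|V|.-1; first by rewrite prednK.
case: (ball_grow u #|V|.-1) => [H|[k0 Hk0 H]].
  have /eqP -> : ball #|V|.-1 u == setT by rewrite eqEcard subsetT cardsT /= -(prednK V0).
  by rewrite inE.
apply: (subsetP (ball_mono u Hk0)).
have Hk0k : k0 <= k by apply: leq_trans Hk0 _; apply: leq_trans Hk; exact: leq_pred.
by rewrite -(ball_stable H (k - k0)) subnKC.
Qed.

Lemma dist_le u v k : v \in ball k u -> dist u v <= k.
Proof.
move=> Hv; rewrite /dist; case: (ltnP k #|V|) => Hk.
  rewrite leqNgt; apply/negP => /(before_find 0).
  by rewrite nth_iota // add0n Hv.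
by apply: leq_trans (find_size _ _) _; rewrite size_iota.
Qed.

Hypothesis conn : connected G.

Lemma dist_in u v : v \in ball (dist u v) u.
Proof.
have [k Hk] := conn u v; have [k' Hk' Hv] := ball_small Hk.
have Hh : has (fun k => v \in ball k u) (iota 0 #|V|).
  by apply/hasP; exists k' => //; rewrite mem_iota.
move: (Hh) => /(nth_find 0); rewrite nth_iota ?add0n //.
by move: Hh; rewrite has_find size_iota.
Qed.

Lemma dist_nbr1 u v i : i < deg G v -> dist u (nbr G v i) <= (dist u v).+1.
Proof. by move=> Hi; apply: dist_le; apply: ball_nbr => //; apply: dist_in. Qed.

Lemma dist_nbr2 u v i : i < deg G v -> dist u v <= (dist u (nbr G v i)).+1.
Proof.
move=> Hi; rewrite -{1}(nbr_back Hi); apply: dist_nbr1; exact: eport_lt.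
Qed.

Lemma dist_par u v : 0 < dist u v ->
  exists2 i, i < deg G v & dist u (nbr G v i) = (dist u v).-1.
Proof.
move=> H; have Hv := dist_in u v; move: H Hv.
case E: (dist u v) => [//|k] _ /ball_inv[Hv|[w [i [Hw Hi Hwi]]]].
  by have := dist_le Hv; rewrite E ltnn.
exists (eport G w i); first by rewrite -Hwi; apply: eport_lt.
have -> : nbr G v (eport G w i) = w by rewrite -Hwi nbr_back.
apply/eqP; rewrite eqn_leq dist_le //=.
have := dist_nbr1 u Hi; rewrite Hwi E; exact.
Qed.

Lemma dist_self u : dist u u = 0.
Proof. by apply/eqP; rewrite -leqn0; apply: dist_le; rewrite /= inE. Qed.

End GraphFacts.
Lemma scan2 (ps : seq nat) f : (scan ps f).2 = has (fun p => (f p).2) ps.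
Proof. by elim: ps => //= p ps IH; case: ((f p).2). Qed.

Section Semantics.
Variables (V : finType) (G : pgraph V) (r : V) (d1 d2 : nat).
Hypothesis Hd1 : 2 <= d1.
Hypothesis Hd12 : d1 <= d2./2.
Hypothesis conn : connected G.

Local Notation q := (qAL d1 d2).
Local Notation dr := (dist G r).
Local Notation blk := (black G r d1 d2).
Local Notation Bn := (Bnode G r d1 d2).

Lemma Hd2 : d1.*2 <= d2.
Proof.
have := Hd12; rewrite -leq_double => H; apply: (leq_trans H).
by rewrite -{2}(odd_double_half d2) leq_addl.
Qed.

Lemma q_eq : q = d1 + d2 + 2. Proof. by []. Qed.

Lemma modq t s : s < q -> (t * q + s) %% q = s.
Proof. by move=> H; rewrite modnMDl modn_small. Qed.

Lemma blackE v : blk v =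
  [|| dr v %% q == d2 + 1, dr v %% q == d1 + d2 + 1, dr v %% q == 0 | dr v %% q == 1].
Proof. by []. Qed.

Lemma black_at t s v : s < q -> dr v = t * q + s ->
  blk v = [|| s == d2 + 1, s == d1 + d2 + 1, s == 0 | s == 1].
Proof. by move=> Hs E; rewrite blackE E modq. Qed.

Lemma Bnode_false v i : i < deg G v -> ~~ blk (nbr G v i) -> Bn v = false.
Proof.
move=> Hi Hw; rewrite /Bnode; apply/negbTE; rewrite negb_and; apply/orP; right.
by apply/allPn; exists i => //; rewrite /ports mem_iota.
Qed.

Lemma Bnode_white v : ~~ blk v -> Bn v = false.
Proof. by rewrite /Bnode => /negbTE ->. Qed.

Lemma dist_near v i : i < deg G v ->
  dr v <= (dr (nbr G v i)).+1 /\ dr (nbr G v i) <= (dr v).+1.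
Proof. by move=> Hi; split; [apply: dist_nbr2 | apply: dist_nbr1]. Qed.

Lemma C_Bnode v : dr v %% q = 0 -> Bn v.
Proof.
move=> H0; have Hq := q_eq; rewrite /Bnode; apply/andP; split; first by rewrite blackE H0 !orbT.
apply/allP => i.
rewrite /ports mem_iota add0n => /andP[_ Hi].
have [H1 H2] := dist_near Hi.
set w := nbr G v i in H1 H2 *.
rewrite (divn_eq (dr v) q) H0 addn0 in H1 H2.
set t := dr v %/ q in H1 H2.
have [E|[E|E]] : dr w = t * q \/ dr w = t * q + 1 \/ (dr w).+1 = t * q by lia.
- rewrite (black_at (t := t) (s := 0)); lia.
- rewrite (black_at (t := t) (s := 1)); lia.
- have Ht : t.-1 * q + q = t * q.
    by case: (t) E => [|t'] E; [rewrite mul0n in E | rewrite mulSn addnC].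
  rewrite (black_at (t := t.-1) (s := d1 + d2 + 1)); lia.
Qed.

Lemma modq_lt v : dr v %% q < q.
Proof. rewrite ltn_mod; have := q_eq; lia. Qed.

Lemma parent_mod v s : dr v %% q = s.+1 -> exists2 i, i < deg G v & dr (nbr G v i) %% q = s.
Proof.
move=> Hs.
have Hp : 0 < dr v by rewrite lt0n; apply/eqP => E; rewrite E mod0n in Hs.
have [i Hi Ei] := dist_par conn Hp; exists i => //.
have Hq := modq_lt v.
rewrite Ei (divn_eq (dr v) q) Hs addnS /= modq //; lia.
Qed.

Lemma A_notB v : dr v %% q = d2 + 1 -> Bn v = false.
Proof.
rewrite addn1 => /parent_mod[i Hi Hm]; apply: (Bnode_false Hi).
have := Hd2; rewrite blackE Hm -!addnA; lia.
Qed.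

Lemma B_notB v : dr v %% q = d1 + d2 + 1 -> Bn v = false.
Proof.
rewrite addn1 => /parent_mod[i Hi Hm]; apply: (Bnode_false Hi).
have := Hd2; rewrite blackE Hm; lia.
Qed.

Lemma wlsS l k v inp : wls G r d1 d2 l k.+1 v inp =
  if blk v && (k.+1 != l) then ([::], false)
  else scan [seq p <- ports G v | Some p != inp]
         (fun p => let m := wls G r d1 d2 l k (nbr G v p) (Some (eport G v p)) in
                   (p :: m.1 ++ [:: eport G v p], m.2)).
Proof. by []. Qed.

Lemma report2 y : (report_test G r d1 d2 y).2 =
  blk y && ~~ has (fun p => Bn (nbr G y p)) (ports G y).
Proof. by rewrite /report_test; case: (blk y). Qed.

Section Succ.
Variable t : nat.
Lemma wls_succ j : j <= d1 -> forall v inp, dr v = t * q + (d2 + 1 + j) ->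
  (inp = None \/ exists e, inp = Some e /\ dr (nbr G v e) = (dr v).+1) ->
  (wls G r d1 d2 d1 j v inp).2.
Proof.
have H2 := Hd2; have Hq := q_eq.
elim: j => [|j IH] Hj v inp Ev Hinp.
- rewrite /= report2 (black_at (t := t) (s := d2 + 1 + 0)); [|lia|lia].
  rewrite addn0 eqxx /=.
  apply/hasPn => p; rewrite /ports mem_iota add0n => /andP[_ Hp].
  have [H3 H4] := dist_near Hp; set w := nbr G v p in H3 H4 *.
  apply/negbT.
  have [E|[E|E]] : dr w = t * q + d2 \/ dr w = t * q + (d2 + 1) \/ dr w = t * q + (d2 + 2) by lia.
  + apply: Bnode_white; rewrite (black_at (t := t) (s := d2)) //; lia.
  + by apply: A_notB; rewrite E modq //; lia.
  + apply: Bnode_white; rewrite (black_at (t := t) (s := d2 + 2)) //; lia.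
- rewrite wlsS.
  have -> : blk v && (j.+1 != d1) = false.
    case Hj1: (j.+1 == d1); first by rewrite andbF.
    rewrite andbT (black_at (t := t) (s := d2 + 1 + j.+1)); lia.
  rewrite /= scan2.
  have Hp : 0 < dr v by lia.
  have [i Hi Ei] := dist_par conn Hp.
  apply/hasP; exists i.
    rewrite mem_filter /ports mem_iota add0n Hi leq0n !andbT.
    case: Hinp => [->//|[e [-> He]]]; apply/eqP => [[Eie]].
    by subst e; move: Ei; rewrite He; lia.
  rewrite /=; apply: IH; first lia.
    by rewrite Ei Ev; lia.
  right; exists (eport G v i); split => //.
  by rewrite nbr_back // Ei; have := Hp; lia.
Qed.
End Succ.

Section Fail.
Variable t : nat.
Lemma wls_fail k : k < d1 -> forall v inp,
  t * q + (k == 0) <= dr v <= t * q + 1 + (d1 - k) ->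
  (wls G r d1 d2 d1 k v inp).2 = false.
Proof.
have H2 := Hd2; have Hq := q_eq.
elim: k => [|k IH] Hk v inp /andP[Ev1 Ev2].
- rewrite /= report2; case Hb: (blk v) => //=.
  have [s Es] : exists s, dr v = t * q + s.+1 by exists (dr v - t * q).-1; lia.
  move: Hb; rewrite (black_at (t := t) (s := s.+1)); [|lia|lia].
  move=> Hb; have Es0 : s = 0 by lia.
  subst s.
  have [i Hi Hm] := parent_mod (s := 0) (v := v) ltac:(rewrite Es modq //; lia).
  apply: negbF; apply/hasP; exists i; last by apply: C_Bnode.
  by rewrite /ports mem_iota.
- rewrite wlsS.
  have -> : (k.+1 != d1) = true by apply/eqP; lia.
  rewrite andbT; case Hb: (blk v) => //.
  rewrite scan2; apply/hasPn => p; rewrite mem_filter /ports mem_iota add0n.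
  move=> /andP[_ /andP[_ Hp]] /=; apply/negbT.
  have [H3 H4] := dist_near Hp.
  have Hs : 2 <= dr v - t * q.
    move: Hb; rewrite (black_at (t := t) (s := dr v - t * q)); lia.
  apply: IH; first lia.
  apply/andP; split; lia.
Qed.
End Fail.

Lemma IsB2 x : (IsB G r d1 d2 x).2 =
  if Bn x then Ans_Bnode else if (wls G r d1 d2 d1 d1 x None).2 then Ans_B else Ans_D.
Proof. by rewrite /IsB /=; case: (Bn x). Qed.

Lemma IsB_sem x : blk x -> [|| inB G r d1 d2 x, inC G r d1 d2 x | inD G r d1 d2 x] ->
  let ans := (IsB G r d1 d2 x).2 in
  (ans = Ans_B <-> inB G r d1 d2 x) /\
  (ans = Ans_D <-> inD G r d1 d2 x && ~~ Bn x).
Proof.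
move=> _ Hc /=; rewrite IsB2.
have H2 := Hd2; have Hq0 := q_eq.
have Hq := modq_lt x.
have E := divn_eq (dr x) q.
rewrite /inB /inC /inD in Hc *.
case/or3P: Hc => /eqP Hm.
- rewrite (B_notB Hm).
  have -> : (wls G r d1 d2 d1 d1 x None).2.
    apply: (wls_succ (t := dr x %/ q)) => //; last by left.
    by rewrite {1}E Hm; lia.
  rewrite Hm eqxx; split; split => //; lia.
- rewrite (C_Bnode Hm) Hm; split; split => //; lia.
- case HB: (Bn x); rewrite Hm.
    by split; split => H; first [discriminate | reflexivity | lia | (move: H; lia) | done].
  have -> : (wls G r d1 d2 d1 d1 x None).2 = false.
    have [k Ek] : exists k, d1 = k.+1 by exists d1.-1; lia.
    have -> : wls G r d1 d2 d1 d1 x None = wls G r d1 d2 d1 k.+1 x None by rewrite -Ek.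
    rewrite wlsS -Ek eqxx andbF scan2; apply/hasPn => p; rewrite mem_filter /ports mem_iota add0n.
    move=> /andP[_ /andP[_ Hp]] /=; apply/negbT.
    have [H3 H4] := dist_near Hp.
    apply: (wls_fail (t := dr x %/ q)); first lia.
    rewrite {1}E Hm in H3 H4 *; apply/andP; split; lia.
  by split; split => H; first [discriminate | reflexivity | lia | (move: H; lia) | done].
Qed.

End Semantics.
Lemma size_flatten_le (T : Type) (s : seq nat) (f : nat -> seq T) m :
  (forall p, p \in s -> size (f p) <= m) -> size (flatten (map f s)) <= size s * m.
Proof.
elim: s => //= p s IH H; rewrite size_cat mulSn leq_add ?H ?inE ?eqxx //.
by apply: IH => q Hq; apply: H; rewrite inE Hq orbT.
Qed.

Lemma scan_size (ps : seq nat) (f : nat -> seq nat * bool) m :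
  (forall p, p \in ps -> size (f p).1 <= m) -> size (scan ps f).1 <= size ps * m.
Proof.
elim: ps => //= p ps IH H.
have Hp : size (f p).1 <= m by apply: H; rewrite inE eqxx.
case: ((f p).2) => /=; first by rewrite mulSn; apply: leq_trans Hp (leq_addr _ _).
rewrite size_cat mulSn leq_add //.
by apply: IH => q Hq; apply: H; rewrite inE Hq orbT.
Qed.

Section SizeBound.
Variables (V : finType) (G : pgraph V) (r : V) (d1 d2 : nat) (D : nat).
Hypothesis HD : forall v, deg G v <= D.
Hypothesis HD2 : 2 <= D.

Lemma size_Bt v : size (Bnode_test G r d1 d2 v).1 <= 2 * D.
Proof.
rewrite /Bnode_test /=.
apply: leq_trans (size_flatten_le (m := 2) _) _ => //.
by rewrite /ports size_iota mulnC leq_mul2l HD orbT.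
Qed.

Lemma size_hb v : size (hasBnbr_test G r d1 d2 v).1 <= D * (2 + 2 * D).
Proof.
rewrite /hasBnbr_test /=.
apply: leq_trans (size_flatten_le (m := 2 + 2 * D) _) _.
  move=> p _; have := size_Bt (nbr G v p); rewrite /Bnode_test /= size_cat /=; lia.
by rewrite /ports size_iota leq_mul2r HD orbT.
Qed.

Lemma size_wls l k v inp : size (wls G r d1 d2 l k v inp).1 + 2 * D <= 6 * D ^ k.+2.
Proof.
elim: k v inp => [|k IH] v inp.
  have -> : wls G r d1 d2 l 0 v inp = report_test G r d1 d2 v by [].
  have := size_hb v; rewrite /report_test !expnS expn0.
  case: (black G r d1 d2 v); cbn [fst size]; nia.
rewrite wlsS; case: (_ && _); cbn [fst size].
  rewrite (expnS D k.+2); have : 0 < D ^ k.+2 by rewrite expn_gt0; lia.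
  nia.
have H : size (scan [seq p <- ports G v | Some p != inp]
  (fun p => let m := wls G r d1 d2 l k (nbr G v p) (Some (eport G v p)) in
            (p :: m.1 ++ [:: eport G v p], m.2))).1 <= D * (2 + (6 * D ^ k.+2 - 2 * D)).
  apply: leq_trans (scan_size (m := 2 + (6 * D ^ k.+2 - 2 * D)) _) _.
    move=> p _ /=; rewrite size_cat /=.
    have := IH (nbr G v p) (Some (eport G v p)); lia.
  rewrite leq_mul2r; apply/orP; right.
  rewrite size_filter; apply: leq_trans (count_size _ _) _; rewrite /ports size_iota; exact: HD.
have HX : 2 * D <= 6 * D ^ k.+2 by have := IH v inp; lia.
rewrite (expnS D k.+2) mulnCA -(subnK HX) mulnDr.
move: H; rewrite mulnDr; set Y := D * (_ - _); set W := size _; nia.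
Qed.

Lemma size_IsB x : size (IsB G r d1 d2 x).1 <= 6 * D ^ (d1 + 2).
Proof.
have -> : (IsB G r d1 d2 x).1 = if (Bnode_test G r d1 d2 x).2 then (Bnode_test G r d1 d2 x).1
   else (Bnode_test G r d1 d2 x).1 ++ (wls G r d1 d2 d1 d1 x None).1.
  by rewrite /IsB; case: ifP.
case: ifP => _.
  have := size_Bt x; rewrite addn2 expnS; have : 0 < D ^ d1.+1 by rewrite expn_gt0; lia.
  nia.
rewrite size_cat; have := size_Bt x; have := size_wls d1 d1 x None.
rewrite addn2; lia.
Qed.

End SizeBound.

Lemma maxdeg2 (V : finType) (G : pgraph V) : connected G -> 2 <= diam G -> 2 <= maxdeg G.
Proof.
move=> conn Hd.
have [u [v Huv]] : exists u v, 2 <= dist G u v.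
  case: (boolP [exists u, exists v, 2 <= dist G u v]).
    by move=> /existsP[u /existsP[v H]]; exists u, v.
  rewrite negb_exists => /forallP H.
  suff : diam G <= 1 by lia.
  apply/bigmax_leqP => u _; apply/bigmax_leqP => v _.
  by have := H u; rewrite negb_exists => /forallP /(_ v); lia.
have [i Hi Ei] := dist_par conn (ltnW Huv).
set w := nbr G v i in Ei.
have Hw : 0 < dist G u w by lia.
have [j Hj Ej] := dist_par conn Hw.
have He := eport_lt Hi; have Hb := nbr_back Hi.
have Hne : j != eport G v i.
  apply/eqP => E; move: Ej; rewrite E -/w Hb Ei; lia.
have : 2 <= deg G w.
  move: Hj He Hne; rewrite -/w; lia.
move=> H; apply: leq_trans H _; by rewrite /maxdeg (bigD1 w) //= leq_maxl.
Qed.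
Section RunFrame.
Variables (V : finType) (G : pgraph V) (col : V -> bool) (R : robot) (Bd : nat).

Definition Reach (v : V) (i : option nat) (s : nat) (ms : seq nat) (v' : V) (i' : option nat) (s' : nat) :=
  walk_end G v ms = v' /\
  forall f, exists2 b, b <= Bd &
    run G col R (size ms + f) v i s =
    (ms ++ (run G col R f v' i' s').1.1.1, (run G col R f v' i' s').1.1.2,
     (run G col R f v' i' s').1.2, maxn b (run G col R f v' i' s').2).

Lemma Reach_trans v1 i1 s1 ms1 v2 i2 s2 ms2 v3 i3 s3 :
  Reach v1 i1 s1 ms1 v2 i2 s2 -> Reach v2 i2 s2 ms2 v3 i3 s3 ->
  Reach v1 i1 s1 (ms1 ++ ms2) v3 i3 s3.
Proof.
move=> [W1 H1] [W2 H2]; split; first by move: W1 W2; rewrite /walk_end foldl_cat => -> ->.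
move=> f; have [b1 Hb1 E1] := H1 (size ms2 + f); have [b2 Hb2 E2] := H2 f.
exists (maxn b1 b2); first by rewrite geq_max Hb1.
by rewrite size_cat -addnA E1 E2 /= catA maxnA.
Qed.

Lemma Reach_step v i s s' p :
  rstep R s (deg G v) (col v) i = (s', Move p) -> p < deg G v -> bits s <= Bd ->
  Reach v i s [:: p] (nbr G v p) (Some (eport G v p)) s'.
Proof.
move=> Hs Hp Hb; split => // f; exists (bits s) => //.
rewrite add1n /= Hs /= Hp.
by case: (run G col R f (nbr G v p) (Some (eport G v p)) s') => [[[ms o] w] b].
Qed.

Lemma run_halt v i s s' a :
  rstep R s (deg G v) (col v) i = (s', Halt a) ->
  run G col R 1 v i s = ([::], Some a, v, maxn (bits s) (bits s')).
Proof. by move=> Hs; rewrite /= Hs. Qed.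

Lemma Reach_refl v i s : Reach v i s [::] v i s.
Proof.
split => // f; exists 0 => //.
by rewrite add0n /=; case: (run G col R f v i s) => [[[ms o] w] b]; rewrite max0n.
Qed.

End RunFrame.
Section Robot.
Variables (V : finType) (G : pgraph V) (r : V) (d1 d2 : nat) (D : nat).
Hypothesis HD : forall v, deg G v <= D.
Hypothesis HD2 : 2 <= D.
Hypothesis Hd1 : 2 <= d1.

Local Notation col := (black G r d1 d2).
Local Notation R := (rob d1).
Local Notation nb := (nbr G).
Local Notation ep := (eport G).
Local Notation dg := (deg G).
Definition Bd := 30 * d1 * up_log 2 D.

Definition okst (s : ast) := all (fun e => e < 16 * D) (ser s) && (size (ser s) <= d1 + 4).
Definition okstk (stk : seq nat) := all (fun e => e < D) stk && (size stk <= d1).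

Lemma bits_ok s : okst s -> bits (enc (ser s)) <= Bd.
Proof.
move=> /andP[Ha Hs].
have HL : 0 < up_log 2 D by rewrite up_log_gt0.
have HW : Wd (ser s) <= 4 + up_log 2 D.
  apply: leq_trans (Wd_le Ha) _; apply: up_log_min => //.
  by rewrite expnD leq_mul2l up_logP.
have := bits_enc (ser s); rewrite /Bd.
move: Hs HW HL; set n := size _; set W := Wd _; set L := up_log 2 D; nia.
Qed.

Definition ReachA v i s ms v' i' s' :=
  Reach G col R Bd v i (enc (ser s)) ms v' i' (enc (ser s')).

Lemma StepA v i s s' p : okst s -> astep d1 s (dg v) (col v) i = (s', Move p) -> p < dg v ->
  ReachA v i s [:: p] (nb v p) (Some (ep v p)) s'.
Proof.
move=> Hok Hs Hp; apply: Reach_step => //; last exact: bits_ok.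
by rewrite /= decst_enc Hs.
Qed.

Lemma okst_of s hd stk : ser s = hd ++ stk -> size hd = 4 ->
  all (fun e => e < 16 * D) hd -> okstk stk -> okst s.
Proof.
move=> E Hh Ha /andP[Hs Hz]; rewrite /okst E all_cat Ha size_cat Hh /=.
rewrite addnC leq_add2r Hz andbT.
apply/allP => e /(allP Hs) He; lia.
Qed.

Lemma okstk_cons e stk : e < D -> okstk stk -> size stk < d1 -> okstk (e :: stk).
Proof. by move=> He /andP[Ha _] Hz; rewrite /okstk /= He Ha. Qed.

Lemma okstk_nil : okstk [::].
Proof. by []. Qed.

Lemma okstk_tail e stk : okstk (e :: stk) -> okstk stk.
Proof. by rewrite /okstk /= => /andP[/andP[_ ->] /ltnW]. Qed.

Lemma ok_BXo a : okst (BXo a). Proof. rewrite /okst /=; case: a; lia. Qed.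
Lemma ok_BXh a : okst (BXh a). Proof. rewrite /okst /=; case: a; lia. Qed.
Lemma ok_AInit : okst AInit. Proof. rewrite /okst /=; lia. Qed.
Ltac okt hd stk := apply: (okst_of (hd := hd) (stk := stk)) => //=; rewrite ?andbT; lia.
Lemma ok_Wd stk : okstk stk -> okst (SWd stk). Proof. move=> H; okt [:: 3; 0; 0; 0] stk. Qed.
Lemma ok_Wa res stk : okstk stk -> okst (SWa res stk).
Proof. move=> H; case: res; [okt [:: 4; 1; 0; 0] stk | okt [:: 4; 0; 0; 0] stk]. Qed.
Lemma ok_Hw h stk : okstk stk -> okst (Hw h stk).
Proof. move=> H; case: h; [okt [:: 5; 1; 0; 0] stk | okt [:: 5; 0; 0; 0] stk]. Qed.
Lemma ok_Hp h a e stk : e < D -> okstk stk -> okst (Hp h a e stk).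
Proof. move=> He H; okt [:: 6; nat_of_bool h; nat_of_bool a; e] stk. Qed.
Lemma ok_Hwr h a e stk : e < D -> okstk stk -> okst (Hwr h a e stk).
Proof. move=> He H; okt [:: 7; nat_of_bool h; nat_of_bool a; e] stk. Qed.
Lemma ok_Hyr h stk : okstk stk -> okst (Hyr h stk).
Proof. move=> H; case: h; [okt [:: 8; 1; 0; 0] stk | okt [:: 8; 0; 0; 0] stk]. Qed.

Lemma loopG (u : V) (A : Type) (start back : A -> ast) (upd : A -> nat -> A) (T : nat -> seq nat) :
  (forall a i, i < dg u -> ReachA (nb u i) (Some (ep u i)) (start a) (T i) u (Some i) (back (upd a i))) ->
  (forall a i, i.+1 < dg u -> astep d1 (back a) (dg u) (col u) (Some i) = (start a, Move i.+1)) ->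
  (forall a, okst (back a)) ->
  forall n i a, i + n.+1 = dg u ->
  ReachA (nb u i) (Some (ep u i)) (start a) (T i ++ flatten [seq j :: T j | j <- iota i.+1 n])
         u (Some (dg u).-1) (back (foldl upd a (iota i n.+1))).
Proof.
move=> Hex Hdec Hok; elim=> [|n IH] i a Hn.
  rewrite /= cats0; have -> : (dg u).-1 = i by lia.
  by apply: Hex; lia.
have Hi : i.+1 < dg u by lia.
have := Reach_trans (Hex a i (ltnW Hi))
   (Reach_trans (StepA (Hok _) (Hdec (upd a i) i Hi) Hi) (IH i.+1 (upd a i) ltac:(lia))).
exact.
Qed.

Lemma foldl_and (P : nat -> bool) a l : foldl (fun a j => a && P j) a l = a && all P l.
Proof. by elim: l a => /= [a|j l IH a]; rewrite ?andbT // IH andbA. Qed.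

Lemma foldl_or (P : nat -> bool) h l : foldl (fun h j => h || P j) h l = h || has P l.
Proof. by elim: l h => /= [h|j l IH h]; rewrite ?orbF // IH orbA. Qed.

Lemma ltD v p : p < dg v -> p < D.
Proof. move=> H; apply: leq_trans H (HD v). Qed.

Lemma iota0S n : 0 < n -> iota 0 n = 0 :: iota 1 n.-1.
Proof. by case: n. Qed.

Lemma BX_ex x a i : i < dg x ->
  ReachA (nb x i) (Some (ep x i)) (BXo a) [:: ep x i] x (Some i) (BXh (a && col (nb x i))).
Proof.
move=> Hi; have := @StepA (nb x i) (Some (ep x i)) (BXo a) (BXh (a && col (nb x i))) (ep x i)
  (ok_BXo a) (erefl _) (eport_lt Hi).
by rewrite nbr_back // eport_back.
Qed.

Lemma BX_loop x a : 0 < dg x ->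
  ReachA (nb x 0) (Some (ep x 0)) (BXo a)
    (behead (Bnode_test G r d1 d2 x).1) x (Some (dg x).-1)
    (BXh (a && all (fun j => col (nb x j)) (ports G x))).
Proof.
move=> H0.
have Hd : forall a' i, i.+1 < dg x -> astep d1 (BXh a') (dg x) (col x) (Some i) = (BXo a', Move i.+1).
  by move=> a' i Hi; rewrite /= Hi.
have := @loopG x bool BXo BXh (fun a j => a && col (nb x j)) (fun j => [:: ep x j])
  (fun a i Hi => BX_ex a Hi) Hd ok_BXh (dg x).-1 0 a ltac:(lia).
by rewrite foldl_and /Bnode_test /ports (iota0S H0) /= andbA.
Qed.


Lemma P_ex w h ew stk a i : ew < D -> okstk stk -> i < dg w ->
  ReachA (nb w i) (Some (ep w i)) (Hp h a ew stk) [:: ep w i] w (Some i) (Hwr h (a && col (nb w i)) ew stk).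
Proof.
move=> He Hs Hi; have := @StepA (nb w i) (Some (ep w i)) (Hp h a ew stk) (Hwr h (a && col (nb w i)) ew stk) (ep w i)
  (ok_Hp h a He Hs) (erefl _) (eport_lt Hi).
by rewrite nbr_back // eport_back.
Qed.

Lemma Wvisit y p h stk : p < dg y -> okstk stk ->
  ReachA (nb y p) (Some (ep y p)) (Hw h stk) ((Bnode_test G r d1 d2 (nb y p)).1 ++ [:: ep y p])
    y (Some p) (Hyr (h || Bnode G r d1 d2 (nb y p)) stk).
Proof.
move=> Hpy Hs.
have Hew : ep y p < dg (nb y p) := eport_lt Hpy.
have HewD := ltD Hew.
have H0 : 0 < dg (nb y p) by lia.
have S1 := @StepA (nb y p) (Some (ep y p)) (Hw h stk) (Hp h (col (nb y p)) (ep y p) stk) 0 (ok_Hw h Hs) (erefl _) H0.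
have Hd : forall a i, i.+1 < dg (nb y p) ->
   astep d1 (Hwr h a (ep y p) stk) (dg (nb y p)) (col (nb y p)) (Some i) = (Hp h a (ep y p) stk, Move i.+1).
  by move=> a i Hi; rewrite /= Hi.
have S2 := @loopG (nb y p) bool (fun a => Hp h a (ep y p) stk) (fun a => Hwr h a (ep y p) stk)
  (fun a j => a && col (nb (nb y p) j)) (fun j => [:: ep (nb y p) j])
  (fun a i Hi => P_ex h a HewD Hs Hi) Hd (fun a => ok_Hwr h a HewD Hs) (dg (nb y p)).-1 0 (col (nb y p)) ltac:(lia).
rewrite foldl_and in S2.
have S3 := @StepA (nb y p) (Some (dg (nb y p)).-1)
  (Hwr h (col (nb y p) && all (fun j => col (nb (nb y p) j)) (iota 0 (dg (nb y p)).-1.+1)) (ep y p) stk)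
  (Hyr (h || (col (nb y p) && all (fun j => col (nb (nb y p) j)) (iota 0 (dg (nb y p)).-1.+1))) stk) (ep y p)
  (ok_Hwr h _ HewD Hs) ltac:(by rewrite /= prednK // ltnn) Hew.
have := Reach_trans S1 (Reach_trans S2 S3).
rewrite nbr_back // eport_back // prednK //.
by rewrite /Bnode_test /Bnode /ports (iota0S H0) /=.
Qed.

Lemma Yloop y h stk : 0 < dg y -> okstk stk ->
  ReachA (nb y 0) (Some (ep y 0)) (Hw h stk)
    (behead (hasBnbr_test G r d1 d2 y).1) y (Some (dg y).-1)
    (Hyr (h || (hasBnbr_test G r d1 d2 y).2) stk).
Proof.
move=> H0 Hs.
have Hd : forall h' i, i.+1 < dg y -> astep d1 (Hyr h' stk) (dg y) (col y) (Some i) = (Hw h' stk, Move i.+1).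
  by move=> h' i Hi; rewrite /= Hi.
have := @loopG y bool (fun h => Hw h stk) (fun h => Hyr h stk) (fun h j => h || Bnode G r d1 d2 (nb y j))
  (fun j => (Bnode_test G r d1 d2 (nb y j)).1 ++ [:: ep y j])
  (fun h i Hi => Wvisit h Hi Hs) Hd (fun h => ok_Hyr h Hs) (dg y).-1 0 h ltac:(lia).
rewrite foldl_or prednK //.
by rewrite /hasBnbr_test /ports (iota0S H0).
Qed.


Lemma FL_cons ex n i p l : FL ex n i = p :: l -> [/\ p < n, Some p != ex & l = FL ex n p.+1].
Proof.
rewrite /FL; move Hm: (n - i) => m; elim: m i Hm => [|m IH] i Hm //=.
case: ifP => Hex.
  by move=> [<- <-]; split => //; [lia | congr filter; congr iota; lia].
by apply: IH; lia.
Qed.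

Definition Fw k u := fun p => let m := wls G r d1 d2 d1 k (nb u p) (Some (ep u p)) in
  (p :: m.1 ++ [:: ep u p], m.2).

Lemma wlsS' k v inp : wls G r d1 d2 d1 k.+1 v inp =
  if col v && (k.+1 != d1) then ([::], false) else scan (FL inp (dg v) 0) (Fw k v).
Proof. by rewrite wlsS /FL subn0. Qed.

Lemma scan_head k u p l : (scan (p :: l) (Fw k u)).1 = p :: behead (scan (p :: l) (Fw k u)).1.
Proof. by rewrite /=; case: (_.2). Qed.

Definition WD k := forall v e stk, size stk + 1 + k = d1 -> e < dg v -> okstk stk ->
  ReachA v (Some e) (SWd stk) ((wls G r d1 d2 d1 k v (Some e)).1 ++ [:: e]) (nb v e) (Some (ep v e))
    (SWa (wls G r d1 d2 d1 k v (Some e)).2 stk).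

Lemma scanW u stku k : size stku + 1 + k = d1 -> okstk stku -> WD k ->
  forall l p i, FL (ohead stku) (dg u) i = p :: l ->
  exists pl, ReachA (nb u p) (Some (ep u p)) (SWd stku) (behead (scan (p :: l) (Fw k u)).1)
               u (Some pl) (SWa (scan (p :: l) (Fw k u)).2 stku) /\
             astep d1 (SWa (scan (p :: l) (Fw k u)).2 stku) (dg u) (col u) (Some pl) =
             ret (scan (p :: l) (Fw k u)).2 stku.
Proof.
move=> Hsz Hs HW; elim=> [|p' l IH] p i /FL_cons[Hp Hex Hl].
  have C := HW (nb u p) (ep u p) stku Hsz (eport_lt Hp) Hs.
  rewrite nbr_back // eport_back // in C.
  exists p; rewrite /= /Fw /=; case: (_.2) C => C; split => //.
    by rewrite cats0.
  by rewrite /= /nextp -Hl.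
have C := HW (nb u p) (ep u p) stku Hsz (eport_lt Hp) Hs.
rewrite nbr_back // eport_back // in C.
have [Hp' _ Hl'] := FL_cons (esym Hl).
case Em: (wls G r d1 d2 d1 k (nb u p) (Some (ep u p))).2 C => C.
  by exists p; rewrite /= /Fw /= Em; split.
have A : astep d1 (SWa false stku) (dg u) (col u) (Some p) = (SWd stku, Move p').
  by rewrite /= /nextp -Hl.
have S2 := StepA (ok_Wa false Hs) A Hp'.
have [pl [S3 A3]] := IH p' p.+1 (esym Hl).
exists pl; split; last by rewrite /= /Fw /= Em /= -/(Fw k u); exact: A3.
have := Reach_trans C (Reach_trans S2 S3).
rewrite /= /Fw /= Em /= -/(Fw k u).
by rewrite (scan_head k u p' l) /= -catA.
Qed.


Lemma Wdesc k : WD k.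
Proof.
elim: k => [|k IH] v e stk Hsz He Hs.
  have Hs' : okstk (e :: stk) by apply: okstk_cons => //; [exact: ltD He | lia].
  have H0 : 0 < dg v by lia.
  have -> : wls G r d1 d2 d1 0 v (Some e) = report_test G r d1 d2 v by [].
  rewrite /report_test; case Hc: (col v).
    have A1 : astep d1 (SWd stk) (dg v) (col v) (Some e) = (Hw false (e :: stk), Move 0).
      by rewrite /= Hc (_ : size stk + 1 == d1) //; apply/eqP; lia.
    have S1 := StepA (ok_Wd Hs) A1 H0.
    have S2 := Yloop false H0 Hs'.
    have A3 : astep d1 (Hyr (false || (hasBnbr_test G r d1 d2 v).2) (e :: stk)) (dg v) (col v)
        (Some (dg v).-1) = (SWa (~~ (hasBnbr_test G r d1 d2 v).2) stk, Move e).
      by rewrite /= prednK // ltnn.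
    have S3 := StepA (ok_Hyr _ Hs') A3 He.
    have := Reach_trans S1 (Reach_trans S2 S3).
    by rewrite /hasBnbr_test /ports (iota0S H0).
  have A1 : astep d1 (SWd stk) (dg v) (col v) (Some e) = (SWa false stk, Move e).
    by rewrite /= Hc (_ : size stk + 1 == d1) //; apply/eqP; lia.
  exact: StepA (ok_Wd Hs) A1 He.
rewrite wlsS'.
have Hne : (size stk + 1 == d1) = false by apply/eqP; lia.
case Hc: (col v) => /=.
  have -> : (k.+1 != d1) = true by apply/eqP; lia.
  have A1 : astep d1 (SWd stk) (dg v) (col v) (Some e) = (SWa false stk, Move e).
    by rewrite /= Hne Hc.
  exact: StepA (ok_Wd Hs) A1 He.
case HF: (FL (Some e) (dg v) 0) => [|p l].
  have A1 : astep d1 (SWd stk) (dg v) (col v) (Some e) = (SWa false stk, Move e).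
    by rewrite /= Hne Hc /nextp HF.
  exact: StepA (ok_Wd Hs) A1 He.
have [Hp _ _] := FL_cons HF.
have Hs' : okstk (e :: stk) by apply: okstk_cons => //; [exact: ltD He | lia].
have A1 : astep d1 (SWd stk) (dg v) (col v) (Some e) = (SWd (e :: stk), Move p).
  by rewrite /= Hne Hc /nextp HF.
have S1 := StepA (ok_Wd Hs) A1 Hp.
have [pl [S2 A2]] := @scanW v (e :: stk) k ltac:(rewrite /=; lia) Hs' IH l p 0 HF.
have A2' : astep d1 (SWa (scan (p :: l) (Fw k v)).2 (e :: stk)) (dg v) (col v) (Some pl) =
  (SWa (scan (p :: l) (Fw k v)).2 stk, Move e) by rewrite A2.
have S3 := StepA (ok_Wa _ Hs') A2' He.
have := Reach_trans S1 (Reach_trans S2 S3).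
by rewrite (scan_head k v p l) /= -catA.
Qed.


Lemma rstep_rob s dg' c i : rstep (rob d1) s dg' c i =
  (enc (ser (astep d1 (decst s) dg' c i).1), (astep d1 (decst s) dg' c i).2).
Proof. by []. Qed.

Lemma top x : exists pl s_fin sh,
  [/\ Reach G col R Bd x None 0 (IsB G r d1 d2 x).1 x pl s_fin,
      rstep R s_fin (dg x) (col x) pl = (sh, Halt (IsB G r d1 d2 x).2),
      bits s_fin <= Bd & bits sh <= Bd].
Proof.
have [k Ek] : exists k, d1 = k.+1 by exists d1.-1; lia.
have Wx : wls G r d1 d2 d1 d1 x None = scan (FL None (dg x) 0) (Fw k x).
  rewrite {3}Ek wlsS' -Ek eqxx andbF //.
case: (posnP (dg x)) => H0.
  have Ht : IsB G r d1 d2 x = ([::], if col x then Ans_Bnode else Ans_D).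
    rewrite /IsB Wx /Bnode_test /Bnode /FL /ports H0 /=.
    by case: (col x).
  exists None, 0, (enc (ser AInit)); rewrite Ht; split => //.
  - exact: Reach_refl.
  - have E : astep d1 AInit (dg x) (col x) None = (AInit, Halt (if col x then Ans_Bnode else Ans_D)).
      by rewrite /= H0.
    by rewrite rstep_rob E.
  - exact: bits_ok ok_AInit.
have S0 : Reach G col R Bd x None 0 [:: 0] (nb x 0) (Some (ep x 0)) (enc (ser (BXo (col x)))).
  have E : astep d1 AInit (dg x) (col x) None = (BXo (col x), Move 0) by rewrite /= H0.
  by apply: Reach_step => //; rewrite rstep_rob E.
have S1 := BX_loop (col x) H0.
have HB : col x && all (fun j => col (nb x j)) (ports G x) = Bnode G r d1 d2 x by [].
rewrite HB in S1.
have Hbt : (Bnode_test G r d1 d2 x).1 = 0 :: behead (Bnode_test G r d1 d2 x).1.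
  by rewrite /Bnode_test /ports (iota0S H0).
case HBx: (Bnode G r d1 d2 x).
  have Ht : IsB G r d1 d2 x = ((Bnode_test G r d1 d2 x).1, Ans_Bnode) by rewrite /IsB /= HBx.
  exists (Some (dg x).-1), (enc (ser (BXh true))), (enc (ser AInit)); rewrite Ht; split.
  - rewrite HBx in S1; rewrite {1}Hbt; exact: Reach_trans S0 S1.
  - have E : astep d1 (BXh true) (dg x) (col x) (Some (dg x).-1) = (AInit, Halt Ans_Bnode).
      by rewrite /= prednK // ltnn.
    by rewrite rstep_rob decst_enc E.
  - exact: bits_ok (ok_BXh _).
  - exact: bits_ok ok_AInit.
rewrite HBx in S1.
have A2 : astep d1 (BXh false) (dg x) (col x) (Some (dg x).-1) = (SWd [::], Move 0).
  by rewrite /= prednK // ltnn.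
have S2 := StepA (ok_BXh false) A2 H0.
have HFL : FL None (dg x) 0 = 0 :: iota 1 (dg x).-1.
  by rewrite /FL subn0 (iota0S H0) /= filter_predT.
have [pl [S3 A3]] := @scanW x [::] k ltac:(rewrite /=; lia) okstk_nil (@Wdesc k) _ 0 0 HFL.
have Ht : IsB G r d1 d2 x = ((Bnode_test G r d1 d2 x).1 ++ (scan (FL None (dg x) 0) (Fw k x)).1,
   if (scan (FL None (dg x) 0) (Fw k x)).2 then Ans_B else Ans_D) by rewrite /IsB /= HBx Wx.
exists (Some pl), (enc (ser (SWa (scan (FL None (dg x) 0) (Fw k x)).2 [::]))), (enc (ser AInit)).
rewrite Ht HFL; split.
- move: (Reach_trans S0 (Reach_trans S1 (Reach_trans S2 S3))) => H.
  cbn [fst]; rewrite {1}Hbt (scan_head k x 0); exact: H.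
- rewrite rstep_rob decst_enc A3; cbn [snd].
  by case: (_.2).
- exact: bits_ok (ok_Wa _ okstk_nil).
- exact: bits_ok ok_AInit.
Qed.

End Robot.

Theorem lemma2 :
  exists c : nat, forall d1 : nat, 2 <= d1 ->
  exists R : robot,
  forall (d2 : nat) (V : finType) (G : pgraph V) (r x : V),
    d1 <= d2./2 ->
    connected G ->
    d1 + d2 + 1 <= diam G ->
    black G r d1 d2 x ->
    [|| inB G r d1 d2 x, inC G r d1 d2 x | inD G r d1 d2 x] ->
    let ms := (IsB G r d1 d2 x).1 in
    let ans := (IsB G r d1 d2 x).2 in
    (ans = Ans_B <-> inB G r d1 d2 x) /\
    (ans = Ans_D <-> inD G r d1 d2 x && ~~ Bnode G r d1 d2 x) /\
    walk_end G x ms = x /\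
    size ms <= c * maxdeg G ^ (d1 + 2) /\
    (exists fuel b,
       run G (black G r d1 d2) R fuel x None 0 = (ms, Some ans, x, b) /\
       b <= c * d1 * up_log 2 (maxdeg G)).
Proof.
exists 30 => d1 Hd1; exists (rob d1) => d2 V G r x Hd12 conn Hdiam Hbl Hc ms ans.
have HD : forall v, deg G v <= maxdeg G.
  by move=> v; rewrite /maxdeg (bigD1 v) //= leq_maxl.
have HD2 : 2 <= maxdeg G.
  apply: maxdeg2 => //; apply: leq_trans Hdiam; lia.
have [S1 S2] := IsB_sem Hd1 Hd12 conn Hbl Hc.
have [pl [s_fin [sh [[W H] Hh Hb1 Hb2]]]] := top r d2 HD HD2 Hd1 x.
split => //; split => //; split => //; split.
  apply: leq_trans (size_IsB r d1 d2 HD HD2 x) _; rewrite leq_mul2r; lia.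
have [b Hb E] := H 1.
exists (size ms + 1), (maxn b (maxn (bits s_fin) (bits sh))).
rewrite /ms E (run_halt Hh) cats0; split => //.
by rewrite !geq_max Hb Hb1 Hb2.
Qed.
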